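(* Let $0<p<\infty$ be such that $p$ is not an even integer, and let $k=\lceil p/2\rceil$. Then $\sum_{j=0}^{k-1}\binom{2k}{j}(-1)^j(k-j)^p\neq 0.$ *)

(* Defs.v *)
From Stdlib Require Import Reals.
Open Scope R_scope.

(* ceiling of a real x, characterised as the natural number k with k-1 < x <= k
   (used only for x > 0, where it is a natural number) *)
Definition is_ceil_nat (x : R) (k : nat) : Prop := INR k - 1 < x /\ x <= INR k.

Definition is_even_integer (p : R) : Prop := exists m : Z, p = 2 * IZR m.

(* S_p = sum_{j=0}^{k-1} C(2k,j) (-1)^j (k-j)^p ; (k-j) >= 1 so Rpower is the real power *)
Definition ceil_sum (p : R) (k : nat) : R :=
  sum_f 0 (k - 1) (fun j => C (2 * k) j * (-1) ^ j * Rpower (INR k - INR j) p).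

(* Main.v *)
Require Import Defs.
From Stdlib Require Import Reals Lra Lia List Arith IndefiniteDescription.
Open Scope R_scope.

Fixpoint Cb (n j : nat) : R := match n, j with
 | O, O => 1 | O, S _ => 0 | S n', O => 1 | S n', S j' => Cb n' j' + Cb n' (S j') end.
Definition D (n:nat) (f:R->R) (x:R) := sum_f_R0 (fun j => Cb n j * (-1)^j * f (x + INR j)) n.

Lemma Cb_big : forall n j, (n < j)%nat -> Cb n j = 0.
Proof.
  induction n; intros [|j] H; simpl; try lia; auto.
  rewrite !IHn by lia. ring.
Qed.

Lemma Cb_0 : forall n, Cb n 0 = 1.
Proof. destruct n; reflexivity. Qed.

Lemma C_nn : forall n, C n n = 1.
Proof. intro n. unfold C. rewrite Nat.sub_diag. simpl. field. apply INR_fact_neq_0. Qed.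

Lemma C_n0 : forall n, C n 0 = 1.
Proof. intro n. unfold C. rewrite Nat.sub_0_r. simpl. field. apply INR_fact_neq_0. Qed.

Lemma Cb_C : forall n j, (j <= n)%nat -> Cb n j = C n j.
Proof.
  induction n; intros j H.
  - assert (j = 0%nat) by lia. subst. rewrite C_n0. reflexivity.
  - destruct j as [|j]. + rewrite C_n0. reflexivity.
    + simpl. destruct (Nat.eq_dec j n) as [->|Hne].
      * rewrite (Cb_big n (S n)) by lia. rewrite IHn by lia. rewrite !C_nn. ring.
      * rewrite !IHn by lia. apply pascal. lia.
Qed.

Lemma D_S : forall n f x, D (S n) f x = D n f x - D n f (x+1).
Proof.
  intros n f x. unfold D. rewrite decomp_sum by lia. simpl pred.
  rewrite (sum_eq _ (fun i => Cb n (S i) * (-1) ^ (S i) * f (x + INR (S i))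
                      - Cb n i * (-1)^i * f (x + 1 + INR i))).
  2:{ intros i _. cbn [Cb]. rewrite S_INR. replace (x + 1 + INR i) with (x + (INR i + 1)) by ring.
      simpl pow. ring. }
  rewrite minus_sum.
  set (T := fun j => Cb n j * (-1) ^ j * f (x + INR j)).
  assert (E1 : sum_f_R0 T (S n) = T 0%nat + sum_f_R0 (fun i => T (S i)) n).
  { rewrite decomp_sum by lia. reflexivity. }
  rewrite tech5 in E1. unfold T at 2 in E1. rewrite Cb_big in E1 by lia.
  change (sum_f_R0 (fun i => Cb n (S i) * (-1) ^ S i * f (x + INR (S i))) n) with (sum_f_R0 (fun i => T (S i)) n).
  unfold T in E1 at 2. rewrite Cb_0 in E1. rewrite Cb_0. simpl pow in *. simpl INR in *.
  fold T. lra.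
Qed.

Lemma D_diff : forall n f x, D n f x - D n f (x+1) = D n (fun y => f y - f (y+1)) x.
Proof.
  intros. unfold D. rewrite <- minus_sum. apply sum_eq. intros i _.
  replace (x + 1 + INR i) with (x + INR i + 1) by ring. ring.
Qed.

Lemma D_ext : forall n f g x, (forall y, f y = g y) -> D n f x = D n g x.
Proof. intros. unfold D. apply sum_eq. intros. rewrite H. reflexivity. Qed.

Lemma sum_swap : forall (A : nat -> nat -> R) N M,
  sum_f_R0 (fun j => sum_f_R0 (fun i => A j i) N) M = sum_f_R0 (fun i => sum_f_R0 (fun j => A j i) M) N.
Proof.
  intros A N M. induction M.
  - simpl. apply sum_eq. intros. reflexivity.
  - rewrite tech5, IHM, <- plus_sum. apply sum_eq. intros. rewrite tech5. reflexivity.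
Qed.

Lemma sum_zero : forall N, sum_f_R0 (fun _ => 0) N = 0.
Proof. intro N. rewrite sum_cte. ring. Qed.

Lemma D_poly : forall n g N x, (forall i, (i <= N)%nat -> D n (fun y => y ^ i) x = 0) ->
  D n (fun y => sum_f_R0 (fun i => g i * y ^ i) N) x = 0.
Proof.
  intros n g N x H. unfold D.
  rewrite (sum_eq _ (fun j => sum_f_R0 (fun i => Cb n j * (-1) ^ j * (g i * (x + INR j) ^ i)) N)).
  2:{ intros j _. rewrite scal_sum. apply sum_eq. intros; ring. }
  rewrite sum_swap. rewrite <- (sum_zero N). apply sum_eq. intros i Hi.
  transitivity (g i * D n (fun y => y ^ i) x).
  - unfold D. rewrite scal_sum. apply sum_eq. intros; ring.
  - rewrite H by exact Hi. ring.
Qed.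

Lemma sum_opp : forall a N, sum_f_R0 (fun i => - a i) N = - sum_f_R0 a N.
Proof. intros a N; induction N; simpl; [ring|rewrite IHN; ring]. Qed.

Lemma D_mono : forall n m x, (m < n)%nat -> D n (fun y => y ^ m) x = 0.
Proof.
  induction n as [|n IH]; intros m x Hm; [lia|].
  rewrite D_S, D_diff. destruct m as [|m].
  - rewrite (D_ext _ _ (fun _ => 0)).
    + unfold D. transitivity (sum_f_R0 (fun _ => 0) n); [apply sum_eq; intros; ring| apply sum_zero].
    + intro y. simpl. ring.
  - rewrite (D_ext _ _ (fun y => sum_f_R0 (fun i => (- C (S m) i) * y ^ i) m)).
    + apply D_poly. intros i Hi. apply IH. lia.
    + intro y. rewrite binomial, tech5, C_nn, Nat.sub_diag.
      rewrite (sum_eq _ (fun i => - (- C (S m) i * y ^ i))).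
      2:{ intros i _. rewrite pow1. ring. }
      rewrite sum_opp. simpl (1 ^ 0). ring.
Qed.
Goal True. idtac. Abort.

Lemma even_sym : forall a b r, (a - b) ^ (2 * r) = (b - a) ^ (2 * r).
Proof. intros. rewrite !pow_mult. f_equal. ring. Qed.

Lemma Dk : forall k r, (r < k)%nat -> D (2 * k) (fun y => (INR k - y) ^ (2 * r)) 0 = 0.
Proof.
  intros k r H.
  rewrite (D_ext _ _ (fun y => sum_f_R0 (fun i => (C (2*r) i * (- INR k) ^ (2*r - i)) * y ^ i) (2*r))).
  - apply D_poly. intros i Hi. apply D_mono. lia.
  - intro y. rewrite even_sym. replace (y - INR k) with (y + - INR k) by ring.
    rewrite binomial. apply sum_eq. intros; ring.
Qed.

Lemma sum_rev : forall a N, sum_f_R0 a N = sum_f_R0 (fun i => a (N - i)%nat) N.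
Proof.
  intros a N. revert a. induction N; intro a.
  - reflexivity.
  - rewrite decomp_sum by lia. simpl pred. rewrite (IHN (fun i => a (S i))).
    rewrite tech5. rewrite Nat.sub_diag. rewrite Rplus_comm. f_equal.
    apply sum_eq. intros i Hi. f_equal. lia.
Qed.

Lemma sym_split : forall a K, (forall j, (j <= K)%nat -> a (2 * S K - j)%nat = a j) ->
  sum_f_R0 a (2 * S K) = 2 * sum_f_R0 a K + a (S K).
Proof.
  intros a K Hs.
  rewrite (tech2 a K (2 * S K)) by lia.
  replace (2 * S K - S K)%nat with (S K) by lia.
  rewrite (decomp_sum (fun i => a (S K + i)%nat)) by lia. simpl pred. rewrite Nat.add_0_r.
  rewrite (sum_rev (fun i => a (S K + S i)%nat)).
  replace (sum_f_R0 (fun i => a (S K + S (K - i))%nat) K) with (sum_f_R0 a K).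
  - ring.
  - apply sum_eq. intros i Hi. rewrite <- Hs by exact Hi. f_equal. lia.
Qed.

Lemma comb_zero : forall K r, (0 < r)%nat -> (r < S K)%nat ->
  sum_f_R0 (fun j => C (2 * S K) j * (-1) ^ j * (INR (S K) - INR j) ^ (2 * r)) K = 0.
Proof.
  intros K r H0 H1.
  set (a := fun j => C (2 * S K) j * (-1) ^ j * (INR (S K) - INR j) ^ (2 * r)).
  assert (E : sum_f_R0 a (2 * S K) = 0).
  { rewrite <- (Dk (S K) r H1). unfold D. apply sum_eq. intros j Hj.
    unfold a. rewrite Cb_C by exact Hj. rewrite Rplus_0_l. reflexivity. }
  rewrite sym_split in E.
  - unfold a at 2 in E. rewrite Rminus_diag, pow_i in E by lia.
    fold a. lra.
  - intros j Hj. unfold a.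
    assert (HC : C (2 * S K) (2 * S K - j) = C (2 * S K) j).
    { rewrite (pascal_step1 (2 * S K) (2 * S K - j)) by lia. f_equal. lia. }
    rewrite HC.
    replace (2 * S K - j)%nat with (2 * (S K - j) + j)%nat by lia.
    rewrite pow_add, pow_mult. replace ((-1) ^ 2) with 1 by ring. rewrite pow1.
    rewrite plus_INR, mult_INR, minus_INR by lia. simpl (INR 2).
    rewrite (even_sym (INR (S K)) (INR j)).
    f_equal; [ring|]. f_equal. ring.
Qed.

Fixpoint F (l : list (R*R)) (x:R) : R :=
  match l with nil => 0 | q :: t => fst q * exp (snd q * x) + F t x end.
Definition dF (l : list (R*R)) := map (fun q => (fst q * snd q, snd q)) l.
Definition sh (b:R) (l:list (R*R)) := map (fun q => (fst q, snd q - b)) l.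
Fixpoint good (l : list (R*R)) : Prop :=
  match l with nil => True | q :: t => fst q <> 0 /\ Forall (fun q' => snd q' <> snd q) t /\ good t end.

Lemma F_deriv : forall l x, derivable_pt_lim (F l) x (F (dF l) x).
Proof.
  induction l as [|q t IH]; intro x; simpl.
  - apply derivable_pt_lim_const.
  - assert (H1 : derivable_pt_lim (fun y => snd q * y) x (snd q)).
    { pose proof (derivable_pt_lim_scal id (snd q) x 1 (derivable_pt_lim_id x)) as H.
      rewrite Rmult_1_r in H. exact H. }
    assert (H2 := derivable_pt_lim_comp _ exp x _ _ H1 (derivable_pt_lim_exp (snd q * x))).
    assert (H3 := derivable_pt_lim_scal _ (fst q) x _ H2).
    assert (H4 := derivable_pt_lim_plus _ _ x _ _ H3 (IH x)).
    replace (fst q * snd q * exp (snd q * x) + F (dF t) x)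
      with (fst q * (exp (snd q * x) * snd q) + F (dF t) x) by ring.
    exact H4.
Qed.

Lemma F_sh : forall b l x, F (sh b l) x = exp (- b * x) * F l x.
Proof.
  induction l as [|q t IH]; intro x; simpl.
  - ring.
  - rewrite IH. replace ((snd q - b) * x) with (- b * x + snd q * x) by ring.
    rewrite exp_plus. ring.
Qed.

Lemma good_dFsh : forall a t, good t -> Forall (fun q => snd q <> a) t -> good (dF (sh a t)).
Proof.
  induction t as [|q t IH]; intros Hg Hf; simpl; auto.
  destruct Hg as [Hc [Hft Hgt]]. inversion Hf; subst.
  split; [|split].
  - apply Rmult_integral_contrapositive; split; auto. intro H; apply H1; lra.
  - unfold dF, sh. rewrite map_map. apply Forall_map. simpl.
    eapply Forall_impl; [|exact Hft]. simpl. intros q' H H'. apply H. lra.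
  - apply IH; auto.
Qed.

Lemma main : forall n l, length l = S n -> good l -> forall z : nat -> R,
  (forall i, (i < n)%nat -> z i < z (S i)) ->
  (forall i, (i <= n)%nat -> F l (z i) = 0) -> False.
Proof.
  induction n as [|n IH]; intros l Hl Hg z Hz H0.
  - destruct l as [|q [|q' t]]; simpl in Hl; try discriminate.
    specialize (H0 0%nat (Nat.le_refl 0)). simpl in H0. destruct Hg as [Hc _].
    rewrite Rplus_0_r in H0. apply Rmult_integral in H0.
    destruct H0 as [H0|H0]; [exact (Hc H0)|].
    assert (H := exp_pos (snd q * z 0%nat)). lra.
  - destruct l as [|q t]; simpl in Hl; [discriminate|]. injection Hl as Hl.
    destruct Hg as [Hc [Hfa Hgt]].
    set (g := F ((fst q, 0) :: sh (snd q) t)).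
    assert (Hgx : forall x, g x = exp (- snd q * x) * F (q::t) x).
    { intro x. unfold g. simpl F. rewrite F_sh. rewrite Rmult_0_l, exp_0.
      rewrite Rmult_plus_distr_l. f_equal.
      rewrite <- Rmult_assoc, (Rmult_comm (exp _)), Rmult_assoc, <- exp_plus.
      replace (- snd q * x + snd q * x) with 0 by ring. rewrite exp_0. ring. }
    assert (Hdg : forall x, derivable_pt_lim g x (F (dF (sh (snd q) t)) x)).
    { intro x. replace (F (dF (sh (snd q) t)) x) with (F (dF ((fst q, 0) :: sh (snd q) t)) x)
        by (simpl; ring).
      apply F_deriv. }
    assert (Hw : forall i, exists w, (i < S n)%nat -> z i < w < z (S i) /\ F (dF (sh (snd q) t)) w = 0).
    { intro i. destruct (Compare_dec.lt_dec i (S n)) as [Hi|Hi]; [|exists 0; intro; contradiction].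
      set (pr := fun x (_ : z i < x < z (S i)) =>
                   exist (fun l => derivable_pt_abs g x l) _ (Hdg x) : derivable_pt g x).
      destruct (Rolle g (z i) (z (S i)) pr) as [c [P Hc0]].
      - intros x _. apply derivable_continuous_pt. exists (F (dF (sh (snd q) t)) x). apply Hdg.
      - apply Hz; exact Hi.
      - rewrite !Hgx, !H0; [ring| lia | lia].
      - exists c. intros _. split; [exact P|]. rewrite <- Hc0.
        symmetry; apply derive_pt_eq_0; apply Hdg. }
    set (w := fun i => proj1_sig (constructive_indefinite_description _ (Hw i))).
    assert (Hwp : forall i, (i < S n)%nat -> z i < w i < z (S i) /\ F (dF (sh (snd q) t)) (w i) = 0).
    { intros i Hi. unfold w. destruct (constructive_indefinite_description _ (Hw i)) as [x Hx].
      simpl. exact (Hx Hi). }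
    apply (IH (dF (sh (snd q) t))) with (z := w).
    + unfold dF, sh. rewrite !length_map. exact Hl.
    + apply good_dFsh; assumption.
    + intros i Hi. destruct (Hwp i ltac:(lia)) as [[_ A] _].
      destruct (Hwp (S i) ltac:(lia)) as [[B _] _]. lra.
    + intros i Hi. apply Hwp. lia.
Qed.

Lemma F_seq : forall (h : nat -> R*R) m s x,
  F (map h (seq s (S m))) x = sum_f_R0 (fun j => fst (h (s+j)%nat) * exp (snd (h (s+j)%nat) * x)) m.
Proof.
  intros h m. induction m; intros s x.
  - simpl. rewrite Nat.add_0_r. ring.
  - change (seq s (S (S m))) with (s :: seq (S s) (S m)).
    rewrite map_cons. change (F (h s :: map h (seq (S s) (S m))) x) with
      (fst (h s) * exp (snd (h s) * x) + F (map h (seq (S s) (S m))) x).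
    rewrite IHm, (decomp_sum _ (S m)) by lia. simpl pred. rewrite Nat.add_0_r. f_equal.
    apply sum_eq. intros i _. rewrite Nat.add_succ_r. reflexivity.
Qed.

Definition hk (k : nat) (j : nat) : R*R := (C (2 * k) j * (-1) ^ j, ln (INR k - INR j)).

Lemma good_seq : forall k m s, (s + m <= k)%nat -> good (map (hk k) (seq s m)).
Proof.
  intros k m. induction m; intros s H; simpl; auto.
  split; [|split].
  - unfold hk; simpl. apply Rmult_integral_contrapositive; split.
    + unfold C. apply Rgt_not_eq. apply Rdiv_lt_0_compat. apply lt_0_INR, lt_O_fact.
      apply Rmult_lt_0_compat; apply lt_0_INR, lt_O_fact.
    + apply pow_nonzero. lra.
  - apply Forall_map. apply Forall_forall. intros j Hj. apply in_seq in Hj.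
    unfold hk; simpl. apply Rlt_not_eq. apply ln_increasing.
    + apply Rlt_Rminus. apply lt_INR. lia.
    + apply Rplus_lt_compat_l, Ropp_lt_contravar, lt_INR. lia.
  - apply IHm. lia.
Qed.

Theorem corollary3p8 (p : R) (k : nat) :
  0 < p -> ~ is_even_integer p -> is_ceil_nat (p / 2) k ->
  ceil_sum p k <> 0.
Proof.
  intros Hp _ [Hk1 Hk2] Hs.
  destruct k as [|n]. { simpl in Hk2. lra. }
  rewrite S_INR in Hk1.
  set (l := map (hk (S n)) (seq 0 (S n))).
  assert (HF : forall x, F l x = sum_f_R0 (fun j => C (2 * S n) j * (-1) ^ j * exp (ln (INR (S n) - INR j) * x)) n).
  { intro x. unfold l. rewrite F_seq. apply sum_eq. intros i _. reflexivity. }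
  set (z := fun i => if (i <? n)%nat then 2 * INR (S i) else p).
  apply (main n l) with (z := z).
  - unfold l. rewrite length_map, length_seq. reflexivity.
  - apply good_seq. lia.
  - intros i Hi. unfold z. assert (Hi' : (i <? n)%nat = true) by (apply Nat.ltb_lt; lia).
    rewrite Hi'. destruct (S i <? n)%nat eqn:E.
    + apply Nat.ltb_lt in E. rewrite (S_INR (S i)). lra.
    + apply Nat.ltb_ge in E. assert (S i = n) by lia. subst n. lra.
  - intros i Hi. unfold z. destruct (i <? n)%nat eqn:E.
    + apply Nat.ltb_lt in E. rewrite HF. rewrite <- (comb_zero n (S i)) by lia.
      apply sum_eq. intros j Hj. f_equal.
      rewrite <- Rpower_pow by (apply Rlt_Rminus, lt_INR; lia).
      unfold Rpower. rewrite mult_INR. simpl (INR 2). f_equal. ring.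
    + rewrite HF. rewrite <- Hs. unfold ceil_sum, sum_f.
      replace (S n - 1 - 0)%nat with n by lia.
      apply sum_eq. intros j _. rewrite Nat.add_0_r. unfold Rpower. f_equal. f_equal. ring.
Qed.
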